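(* If $C\subseteq\mathbb{R}$ satisfies $|C|=|\mathbb{R}\setminus C|=\mathfrak{c}$, then there is a two-point selection $f$ on $\mathbb{R}$ such that $C\in\mathcal{M}_f\setminus\mathcal{B}_f(\mathbb{R})$.
   Context: $\mathfrak{c}=|\mathbb{R}|$. A two-point selection on $\mathbb{R}$ is a function $f$ from the set of two-element subsets of $\mathbb{R}$ to $\mathbb{R}$ with $f(F)\in F$. Write $r<_f s$ if $f(\{r,s\})=r$ ($r\ne s$) and $r\le_f s$ if $r<_f s$ or $r=s$. Put $(\leftarrow,r)_f=\{x: x<_f r\}$, $(r,\rightarrow)_f=\{x: r<_f x\}$, and $(r,s]_f=\{x: r<_f x \text{ and } x\le_f s\}$. The topology $\tau_f$ is generated (as a subbase) by all $(\leftarrow,r)_f$, $(r,\rightarrow)_f$; $\mathcal{B}_f(\mathbb{R})$ is the $\sigma$-algebra generated by $\tau_f$. The outer measure $\lambda_f$ on $\mathbb{R}$ is $\lambda_f(A)=\inf\{\sum_{n\in\mathbb{N}}|s_n-r_n| : A\subseteq\bigcup_{n\in\mathbb{N}}(r_n,s_n]_f\}$ if $A$ can be covered by countably many such sets, and $\lambda_f(A)=+\infty$ otherwise. $\mathcal{M}_f$ is the $\sigma$-algebra of $\lambda_f$-measurable sets (in the sense of Carathéodory). *)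

(* Defs.v *)
From HB Require Import structures.
From mathcomp Require Import all_boot all_order all_algebra.
From mathcomp Require Import all_classical all_reals all_analysis.
Set Implicit Arguments. Unset Strict Implicit. Unset Printing Implicit Defensive.
Import Order.TTheory GRing.Theory Num.Theory.
Local Open Scope classical_set_scope.
Local Open Scope ring_scope.

Section TwoPoint.
Variable R : realType.

(* f is a two-point selection: it assigns to every two-element subset F of R
   an element of F (its values on other subsets are irrelevant). *)
Definition two_point_selection (f : set R -> R) : Prop :=
  forall r s : R, r <> s -> [set r; s] (f [set r; s]).

Definition sel_lt (f : set R -> R) (r s : R) : Prop :=
  r <> s /\ f [set r; s] = r.

Definition sel_le (f : set R -> R) (r s : R) : Prop := sel_lt f r s \/ r = s.

Definition sel_ray_left (f : set R -> R) (r : R) : set R := [set x | sel_lt f x r].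
Definition sel_ray_right (f : set R -> R) (r : R) : set R := [set x | sel_lt f r x].
Definition sel_itv (f : set R -> R) (r s : R) : set R :=
  [set x | sel_lt f r x /\ sel_le f x s].

Definition sel_subbase (f : set R -> R) : set (set R) :=
  [set U | exists r, U = sel_ray_left f r \/ U = sel_ray_right f r].

(* tau_f : the topology generated by the subbase, i.e. the sets U such that
   every point of U lies in a finite intersection of subbasic sets
   contained in U (the empty intersection being R). *)
Definition sel_open (f : set R -> R) : set (set R) :=
  [set U | forall x, U x -> exists (n : nat) (G : nat -> set R),
     (forall i, (i < n)%N -> sel_subbase f (G i)) /\
     (\bigcap_(i in [set i | (i < n)%N]) G i) x /\
     (\bigcap_(i in [set i | (i < n)%N]) G i) `<=` U].

Definition sel_borel (f : set R -> R) : set (set R) := <<s sel_open f >>.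

(* the outer measure lambda_f; the infimum of the empty set is +oo *)
Definition sel_lambda (f : set R -> R) (A : set R) : \bar R :=
  ereal_inf [set v : \bar R | exists (r s : nat -> R),
     A `<=` \bigcup_n sel_itv f (r n) (s n) /\
     v = (\sum_(0 <= n <oo) (`|s n - r n|)%:E)%E].

End TwoPoint.

(* Main.v *)
Require Import Defs.
From HB Require Import structures.
From mathcomp Require Import all_boot all_order all_algebra.
From mathcomp Require Import all_classical all_reals all_analysis.
From mathcomp Require Import ring lra.
Set Implicit Arguments. Unset Strict Implicit. Unset Printing Implicit Defensive.
Import Order.TTheory GRing.Theory Num.Theory.
Local Open Scope classical_set_scope.
Local Open Scope ring_scope.

Section Constr.
Variable R : realType.
Variable C : set R.
Variable g : R -> R.
Hypothesis gbij : set_bij C (~` C) g.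

Definition p (x : R) : R :=
  if pselect (C x) then x else xget 0 [set c | C c /\ g c = x].

Lemma pCx x : C x -> p x = x.
Proof. by rewrite /p; case: (pselect (C x)). Qed.

Lemma pnC x : ~ C x -> C (p x) /\ g (p x) = x.
Proof.
move=> nCx; rewrite /p; case: (pselect (C x)) => // nCx2.
apply: (@xgetPex _ 0 [set c | C c /\ g c = x]).
case: gbij => _ _ /(_ x nCx) [c Cc gc]; by exists c.
Qed.

Lemma pC x : C (p x).
Proof. by have [/pCx->//|/pnC[]//] := pselect (C x). Qed.

Lemma gnC c : C c -> ~ C (g c).
Proof. by case: gbij => /(_ c) + _ _; apply. Qed.

Lemma pg c : C c -> p (g c) = c.
Proof.
move=> Cc; have [Cp gp] := pnC (gnC Cc).
by case: gbij => _ /(_ (p (g c)) c) + _; apply => //; rewrite inE.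
Qed.

Lemma p_inj x x' : p x = p x' -> (C x <-> C x') -> x = x'.
Proof.
move=> ep [i1 i2]; have [Cx|nCx] := pselect (C x).
  by rewrite -(pCx Cx) ep pCx //; exact: i1.
have nCx' : ~ C x' by move/i2.
by rewrite -(pnC nCx).2 ep (pnC nCx').2.
Qed.

Definition sq (x : R) := x / (1 + `|x|).

Lemma sq_bnd x : -1 < sq x < 1.
Proof.
rewrite /sq; have h1 : 0 < 1 + `|x| by rewrite ltr_pwDl.
rewrite ltr_pdivrMr // ltr_pdivlMr //.
apply/andP; split; have := normr_ge0 x; case: (ger0P x) => _ ; lra.
Qed.

Lemma sq_inj : injective sq.
Proof.
move=> a b; rewrite /sq => e.
have ha : 0 < 1 + `|a| by rewrite ltr_pwDl.
have hb : 0 < 1 + `|b| by rewrite ltr_pwDl.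
have e2 : a * (1 + `|b|) = b * (1 + `|a|).
  by move/eqP: e; rewrite eqr_div ?lt0r_neq0 // => /eqP.
move: e2; case: (ger0P a) => ha'; case: (ger0P b) => hb' e2; nra.
Qed.

Variable y : nat -> R.
Hypothesis y_inj : injective y.
Hypothesis y_side : (forall j, C (y j)) \/ (forall j, ~ C (y j)).
Hypothesis y_p0 : forall j, p (y j) <> p 0.

Lemma py_inj i j : p (y i) = p (y j) -> i = j.
Proof.
move=> e; apply: y_inj; apply: p_inj => //.
case: y_side => H; first by split=> _; apply: H.
by split => K; exfalso; apply: (H _ K).
Qed.

Definition h (c : R) : R :=
  if pselect (c = p 0) then 5 else
  if pselect (exists j, p (y j) = c)
  then - ((xget 0%N [set j | p (y j) = c])%:R + 2) else sq c.

Lemma h_p0 : h (p 0) = 5.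
Proof. by rewrite /h; case: pselect. Qed.

Lemma h_y j : h (p (y j)) = - (j%:R + 2).
Proof.
rewrite /h; case: pselect => [/y_p0//|n1].
case: pselect => [ex|n2]; last by case: n2; exists j.
have := @xgetPex _ 0%N [set i | p (y i) = p (y j)] ex.
by move=> /= /py_inj ->.
Qed.

Lemma h_cases c : [\/ c = p 0 /\ h c = 5,
  exists j, c = p (y j) /\ h c = - (j%:R + 2) |
  (c <> p 0 /\ forall j, c <> p (y j)) /\ h c = sq c].
Proof.
have [->|c0] := pselect (c = p 0); first by apply: Or31; rewrite h_p0.
have [[j <-]|nj] := pselect (exists j, p (y j) = c).
  by apply: Or32; exists j; rewrite h_y.
apply: Or33; split; first by split => // j cj; apply: nj; exists j.
by rewrite /h; case: pselect => // n1; case: pselect.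
Qed.

Lemma h_inj : injective h.
Proof.
move=> a b.
have nat_neq (i j : nat) : - (i%:R + 2) = - (j%:R + 2) :> R -> i = j.
  by move/oppr_inj/addIr/eqP; rewrite eqr_nat => /eqP.
have sq5 c : sq c <> 5 by have := sq_bnd c; move=> /andP[_ h1] e; move: h1; rewrite e; lra.
have sqj c (j : nat) : sq c <> - (j%:R + 2).
  move=> e; have := sq_bnd c; rewrite e => /andP[h1 _].
  have : (0 : R) <= j%:R by [].
  lra.
have j5 (j : nat) : - (j%:R + 2) <> 5 :> R.
  by move=> e; have : (0 : R) <= j%:R by []; lra.
case: (h_cases a) => [[-> ->]|[i [-> ->]]|[[a0 ai] ->]];
case: (h_cases b) => [[-> ->]|[j [-> ->]]|[[b0 bj] ->]] //.
- by move=> /esym /j5.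
- by move=> /esym /sq5.
- by move/j5.
- by move/nat_neq ->.
- by move/esym/sqj.
- by move/sq5.
- by move/sqj.
- exact: sq_inj.
Qed.

Lemma h_lt5 c : c <> p 0 -> h c < 5.
Proof.
move=> c0; case: (h_cases c) => [[//]|[j [_ ->]]|[_ ->]].
  by have : (0 : R) <= j%:R by []; lra.
by have := sq_bnd c; move=> /andP[_ h1]; lra.
Qed.

Lemma h_lb c : exists n : nat, - (n%:R + 2) < h c.
Proof.
case: (h_cases c) => [[_ ->]|[j [_ ->]]|[_ ->]].
- by exists 0%N; lra.
- by exists j.+1; rewrite -natr1; lra.
- by exists 0%N; have := sq_bnd c; move=> /andP[h1 _]; lra.
Qed.

Definition klt (a b : R) : Prop :=
  h (p a) < h (p b) \/ (h (p a) = h (p b) /\ C a /\ ~ C b).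

Lemma klt_irr a : ~ klt a a.
Proof. by case=> [|[_ []]//]; rewrite ltxx. Qed.

Lemma klt_trans a b c : klt a b -> klt b c -> klt a c.
Proof.
case=> [ab|[ab [Ca nCb]]] [bc|[bc [Cb nCc]]].
- by left; apply: lt_trans ab bc.
- by left; rewrite -bc.
- by left; rewrite ab.
- by [].
Qed.

Lemma klt_asym a b : klt a b -> ~ klt b a.
Proof. by move=> ab ba; apply: (klt_irr (klt_trans ab ba)). Qed.

Lemma klt_total a b : a <> b -> klt a b \/ klt b a.
Proof.
move=> ab; case: (ltgtP (h (p a)) (h (p b))) => [l|l|e]; [by left; left|by right; left|].
have pe := h_inj e.
have [Ca|nCa] := pselect (C a); have [Cb|nCb] := pselect (C b).
- by case: ab; apply: p_inj.
- by left; right.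
- by right; right.
- by case: ab; apply: p_inj.
Qed.

Definition f (F : set R) : R :=
  xget 0 [set x | F x /\ forall z, F z -> x = z \/ klt x z].

Lemma f2 r s : r <> s ->
  (f [set r; s] = r /\ klt r s) \/ (f [set r; s] = s /\ klt s r).
Proof.
move=> rs.
have ex : exists x, [set x | [set r; s] x /\ forall z, [set r; s] z -> x = z \/ klt x z] x.
  case: (klt_total rs) => k.
    by exists r; split; [left|move=> z [->|->]; [left|right]].
  by exists s; split; [right|move=> z [->|->]; [right|left]].
have : [set x | [set r; s] x /\ forall z, [set r; s] z -> x = z \/ klt x z] (f [set r; s]).
  by rewrite /f; apply: (xgetPex 0 ex).
move: (f _) => z [[->|->] H].
- case: (H s (or_intror erefl)) => // k.
  by left.
- case: (H r (or_introl erefl)) => // [/esym//|k].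
  by right.
Qed.

Lemma sel_ltE r s : sel_lt f r s <-> klt r s.
Proof.
split.
  move=> [rs fe]; case: (f2 rs) => [[_ //]|[e _]].
  by case: rs; rewrite -fe e.
move=> k; have rs : r <> s by move=> e; apply: (klt_irr (a:=r)); rewrite {2}e.
split => //; case: (f2 rs) => [[-> //]|[_ k']].
by case: (klt_asym k k').
Qed.

Lemma tps : two_point_selection f.
Proof.
by move=> r s rs; case: (f2 rs) => [[-> _]|[-> _]]; [left|right].
Qed.


Lemma countable_sub (A B : set R) : A `<=` B -> countable B -> countable A.
Proof. by move=> AB; apply: sub_countable; apply: subset_card_le. Qed.

Lemma countU (A B : set R) : countable A -> countable B -> countable (A `|` B).
Proof.
move=> cA cB.
have -> : A `|` B = \bigcup_(i in [set: bool]) (if i then A else B).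
  apply/seteqP; split=> x.
    by case=> H; [exists true|exists false].
  by case=> -[] _ H; [left|right].
apply: bigcup_countable; first exact: countableP.
by move=> [] _.
Qed.

Definition sep (A : set R) : set R := [set c | C c /\ ~ (A c <-> A (g c))].
Definition Sig : set (set R) := [set A | countable (sep A)].

Lemma Sig_sigma : sigma_algebra setT Sig.
Proof.
split.
- apply: (countable_sub (B := set0)) => // c [_ H]; apply: H; by split.
- move=> A; rewrite /Sig /=; apply: countable_sub => c [Cc H]; split => //.
  move=> [i1 i2]; apply: H; split => -[_ Hn]; split => // K.
    by apply: Hn; apply: i2.
  by apply: Hn; apply: i1.
- move=> A cA; rewrite /Sig /=.
  apply: (countable_sub (B := \bigcup_(k in [set: nat]) sep (A k))); last first.
    by apply: bigcup_countable => [|k _]; [exact: countableP|exact: cA].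
  move=> c [Cc H].
  have [[k _ Akc]|nc] := pselect ((\bigcup_k A k) c).
    have [[k' _ Akg]|ng] := pselect ((\bigcup_k A k) (g c)).
      by exfalso; apply: H; split => _; [exists k'|exists k].
    exists k => //; split => // -[i1 _]; apply: ng; exists k => //; exact: i1.
  have [[k' _ Akg]|ng] := pselect ((\bigcup_k A k) (g c)).
    exists k' => //; split => // -[_ i2]; apply: nc; exists k' => //; exact: i2.
  by exfalso; apply: H; split => K.
Qed.

Lemma open_nbhd U c : sel_open f U -> U c ->
  exists n (G : nat -> set R), (forall i, (i < n)%N -> sel_subbase f (G i)) /\
    (forall i, (i < n)%N -> G i c) /\
    (forall x, (forall i, (i < n)%N -> G i x) -> U x).
Proof.
move=> /(_ c) H /H [n [G [sG [Gc GU]]]]; exists n, G; split; first exact: sG.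
split; first by move=> i ilt; apply: Gc.
by move=> x Hx; apply: GU => i ilt; apply: Hx.
Qed.

Lemma lower_bound U c : C c -> sel_open f U -> U c ->
  exists l, l < h c /\ forall x, l < h (p x) -> h (p x) < h c -> U x.
Proof.
move=> Cc oU Uc; have [n [G [sG [Gc GU]]]] := open_nbhd oU Uc.
suff [l [lc Hl]] : exists l, l < h c /\
    forall x, l < h (p x) -> h (p x) < h c -> forall i, (i < n)%N -> G i x.
  by exists l; split => // x l1 l2; apply: GU; apply: Hl.
have pc : p c = c by apply: pCx.
elim: n sG Gc {GU} => [|n IH] sG Gc.
  by exists (h c - 1); split; [lra|].
have [l [lc Hl]] := IH (fun i ilt => sG i (ltnW ilt)) (fun i ilt => Gc i (ltnW ilt)).
have [r [Gn|Gn]] := sG n (ltnSn n).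
- exists l; split => // x l1 l2 i; rewrite ltnS leq_eqVlt => /orP[/eqP ->|ilt]; rewrite ?Gn; last exact: Hl.
  move: (Gc n (ltnSn n)); rewrite Gn /sel_ray_left /= !sel_ltE => ck.
  by apply: klt_trans ck; left; rewrite pc.
- move: (Gc n (ltnSn n)); rewrite Gn /sel_ray_right /= sel_ltE => -[rc|[_ [_ nC]]//].
  rewrite pc in rc.
  have [lr|rl] := leP l (h (p r)).
  + exists (h (p r)); split => // x l1 l2 i; rewrite ltnS leq_eqVlt => /orP[/eqP ->|ilt]; rewrite ?Gn.
      by rewrite /sel_ray_right /= sel_ltE; left.
    by apply: Hl => //; apply: le_lt_trans l1.
  + exists l; split => // x l1 l2 i; rewrite ltnS leq_eqVlt => /orP[/eqP ->|ilt]; rewrite ?Gn; last exact: Hl.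
    by rewrite /sel_ray_right /= sel_ltE; left; apply: lt_trans l1.
Qed.

Lemma upper_bound U c : C c -> sel_open f U -> U (g c) ->
  exists u, h c < u /\ forall x, h c < h (p x) -> h (p x) < u -> U x.
Proof.
move=> Cc oU Uc; have [n [G [sG [Gc GU]]]] := open_nbhd oU Uc.
suff [u [lc Hl]] : exists u, h c < u /\
    forall x, h c < h (p x) -> h (p x) < u -> forall i, (i < n)%N -> G i x.
  by exists u; split => // x l1 l2; apply: GU; apply: Hl.
have pc : p (g c) = c by apply: pg.
have nC := gnC Cc.
elim: n sG Gc {GU} => [|n IH] sG Gc.
  by exists (h c + 1); split; [lra|].
have [u [lc Hl]] := IH (fun i ilt => sG i (ltnW ilt)) (fun i ilt => Gc i (ltnW ilt)).
have [r [Gn|Gn]] := sG n (ltnSn n).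
- move: (Gc n (ltnSn n)); rewrite Gn /sel_ray_left /= sel_ltE => -[rc|[_ [//]]].
  rewrite pc in rc.
  have [lr|rl] := leP u (h (p r)).
  + exists u; split => // x l1 l2 i; rewrite ltnS leq_eqVlt => /orP[/eqP ->|ilt]; rewrite ?Gn; last exact: Hl.
    by rewrite /sel_ray_left /= sel_ltE; left; apply: lt_le_trans lr.
  + exists (h (p r)); split => // x l1 l2 i; rewrite ltnS leq_eqVlt => /orP[/eqP ->|ilt]; rewrite ?Gn.
      by rewrite /sel_ray_left /= sel_ltE; left.
    by apply: Hl => //; apply: lt_trans rl.
- exists u; split => // x l1 l2 i; rewrite ltnS leq_eqVlt => /orP[/eqP ->|ilt]; rewrite ?Gn; last exact: Hl.
  move: (Gc n (ltnSn n)); rewrite Gn /sel_ray_right /= !sel_ltE => ck.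
  by apply: klt_trans ck _; left; rewrite pc.
Qed.

Lemma open_Sig U : sel_open f U -> Sig U.
Proof.
move=> oU.
pose S1 := [set c | C c /\ U c /\ ~ U (g c)].
pose S2 := [set c | C c /\ ~ U c /\ U (g c)].
apply: (countable_sub (B := S1 `|` S2)).
  move=> c [Cc H]; have [Uc|nUc] := pselect (U c).
    by left; split => //; split => // Ug; apply: H; split.
  right; split => //; split => //.
  by apply: contrapT => nUg; apply: H; split.
apply: countU.
- pose q1 c := xget 0 [set q : rat | ratr q < h c /\
                 forall x, ratr q < h (p x) -> h (p x) < h c -> U x].
  have q1P c : S1 c -> ratr (q1 c) < h c /\
                 forall x, ratr (q1 c) < h (p x) -> h (p x) < h c -> U x.
    move=> [Cc [Uc _]]; apply: (@xgetPex _ 0 [set q : rat | ratr q < h c /\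
                 forall x, ratr q < h (p x) -> h (p x) < h c -> U x]).
    have [l [lc Hl]] := lower_bound Cc oU Uc.
    have [q] := rat_in_itvoo lc; rewrite in_itv /= => /andP[lq qc].
    exists q; split => // x l1 l2; apply: Hl => //; exact: lt_trans l1.
  apply/countable_injP; exists (fun c => pickle (q1 c)) => c c'.
  rewrite !inE => S1c S1c' /(pcan_inj pickleK) e.
  have [Cc [Uc nUg]] := S1c; have [Cc' [Uc' nUg']] := S1c'.
  case: (ltgtP (h c) (h c')) => [hl|hl|/h_inj //].
  + exfalso; apply: nUg; apply: (q1P c' S1c').2; rewrite pg //.
    by rewrite -e; exact: (q1P c S1c).1.
  + exfalso; apply: nUg'; apply: (q1P c S1c).2; rewrite pg //.
    by rewrite e; exact: (q1P c' S1c').1.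
- pose q2 c := xget 0 [set q : rat | h c < ratr q /\
                 forall x, h c < h (p x) -> h (p x) < ratr q -> U x].
  have q2P c : S2 c -> h c < ratr (q2 c) /\
                 forall x, h c < h (p x) -> h (p x) < ratr (q2 c) -> U x.
    move=> [Cc [_ Ug]]; apply: (@xgetPex _ 0 [set q : rat | h c < ratr q /\
                 forall x, h c < h (p x) -> h (p x) < ratr q -> U x]).
    have [u [lc Hl]] := upper_bound Cc oU Ug.
    have [q] := rat_in_itvoo lc; rewrite in_itv /= => /andP[lq qc].
    exists q; split => // x l1 l2; apply: Hl => //; exact: lt_trans qc.
  apply/countable_injP; exists (fun c => pickle (q2 c)) => c c'.
  rewrite !inE => S2c S2c' /(pcan_inj pickleK) e.
  have [Cc [nUc Ug]] := S2c; have [Cc' [nUc' Ug']] := S2c'.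
  case: (ltgtP (h c) (h c')) => [hl|hl|/h_inj //].
  + have := (q2P c S2c).2 c'; rewrite (pCx Cc') => H; exfalso; apply: nUc'.
    by apply: H => //; rewrite e; exact: (q2P c' S2c').1.
  + have := (q2P c' S2c').2 c; rewrite (pCx Cc) => H; exfalso; apply: nUc.
    by apply: H => //; rewrite -e; exact: (q2P c S2c).1.
Qed.

Lemma not_borel : ~ countable C -> ~ sel_borel f C.
Proof.
move=> nc HB; apply: nc.
have : Sig C by apply: HB; split; [exact: Sig_sigma|exact: open_Sig].
apply: countable_sub => c Cc; split => // -[i1 _].
exact: (gnC Cc (i1 Cc)).
Qed.


Hypothesis C0 : ~ C 0.
Hypothesis y_bnd : forall j, `|y j| <= ((2 ^ j)%:R)^-1.

Lemma inv2_le i j : (i <= j)%N -> ((2 ^ j)%:R)^-1 <= ((2 ^ i)%:R)^-1 :> R.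
Proof.
move=> ij; rewrite lef_pV2 ?posrE ?ltr0n ?expn_gt0 // ler_nat.
by rewrite leq_pexp2l.
Qed.

Lemma klt_0 z : z <> 0 -> klt z 0.
Proof.
move=> z0; have [e|ne] := pselect (p z = p 0).
  right; split; first by rewrite e.
  split => //; apply: contrapT => nCz; apply: z0; apply: p_inj; first exact: e.
  by split => K; exfalso; [apply: nCz|apply: C0].
by left; rewrite h_p0; apply: h_lt5.
Qed.

Lemma klt_y z : exists N, forall j, (N <= j)%N -> klt (y j) z.
Proof.
have [N HN] := h_lb (p z); exists N => j Nj; left; rewrite h_y.
apply: le_lt_trans HN; rewrite lerN2 lerD2r ler_nat //.
Qed.

Definition chain (M k : nat) : R := if k == 0%N then 0 else y (M + k).

Lemma chain_cover M z : exists n, sel_itv f (chain M n.+1) (chain M n) z.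
Proof.
have [N HN] := klt_y z.
have ex : exists k, (0 < k)%N && `[< klt (chain M k) z >].
  exists N.+1; apply/andP; split => //; apply/asboolP.
  by rewrite /chain /=; apply: HN; apply: leq_trans (leq_addl M N) _; rewrite addnS; exact: leqnSn.
have [k0 /andP[k0pos /asboolP Hk] kmin] := find_ex_minn ex.
exists k0.-1; rewrite prednK //; split; first by rewrite sel_ltE.
have [e0|n0] := eqVneq k0.-1 0%N.
  rewrite e0 /chain /=.
  have [->|z0] := pselect (z = 0); first by right.
  by left; rewrite sel_ltE; apply: klt_0.
have nk : ~ klt (chain M k0.-1) z.
  move=> K; have := kmin k0.-1; rewrite lt0n n0 /=.
  have -> : `[< klt (chain M k0.-1) z >] by apply/asboolP.
  by move=> /(_ isT); rewrite -ltnS prednK // ltnn.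
have [->|zne] := pselect (z = chain M k0.-1); first by right.
by case: (klt_total zne) => // K; left; rewrite sel_ltE.
Qed.

Lemma chain_cost M n : `|chain M n - chain M n.+1| <= 2 * ((2 ^ (M + n))%:R)^-1.
Proof.
apply: le_trans (ler_normB _ _) _; rewrite mulr2n mulrDl mul1r.
apply: lerD.
  rewrite /chain; case: eqP => _; first by rewrite normr0 invr_ge0.
  exact: y_bnd.
rewrite /chain /=; apply: le_trans (y_bnd _) _; apply: inv2_le.
by rewrite addnS.
Qed.

Lemma lambda0 X : sel_lambda f X = 0%E.
Proof.
apply/eqP; rewrite eq_le; apply/andP; split; last first.
  apply/ereal_infP => v [r [s [_ ->]]]; apply: nneseries_ge0 => n _ _.
  by rewrite lee_fin normr_ge0.
apply/lee_addgt0Pr => e e0; rewrite add0e.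
pose M := Num.Def.archi_bound (4 / e).
have hM : 4 / e < 2 ^+ M :> R by apply: upper_nthrootP.
apply: (@le_trans _ _ (\sum_(0 <= n <oo) (`|chain M n - chain M n.+1|)%:E)%E).
  apply: ereal_inf_lbound.
  exists (fun n => chain M n.+1), (fun n => chain M n); split => //.
  by move=> z _; have [n Hn] := chain_cover M z; exists n.
apply: le_trans (epsilon_trick0 xpredT (ltW e0)).
apply: lee_nneseries => [n _ _|n _]; first by rewrite lee_fin normr_ge0.
rewrite lee_fin; apply: le_trans (chain_cost M n) _.
rewrite expnD expnS !natrM !natrX.
set a := (2:R) ^+ M; set b := (2 : R) ^+ n.
have a0 : 0 < a by rewrite exprn_gt0.
have b0 : 0 < b by rewrite exprn_gt0.
have h4 : 4 / a < e.
  by rewrite ltr_pdivrMr // mulrC -ltr_pdivrMr.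
have -> : 2 * (a * b)^-1 = (4 / a) / (2 * b).
  by field; apply/andP; split; apply: lt0r_neq0.
by rewrite ler_pM2r ?invr_gt0 ?mulr_gt0 // ltW.
Qed.

Lemma carat : caratheodory_measurable (sel_lambda f) C.
Proof. by move=> X; rewrite !lambda0 adde0. Qed.

End Constr.

Fixpoint phi_rec (P : nat -> Prop) (j : nat) : nat :=
  match j with
  | 0 => xget 0%N [set n | P n]
  | S j' => xget 0%N [set n | (phi_rec P j' < n)%N /\ P n]
  end.

Lemma phi_recP (P : nat -> Prop) : (forall N, exists n, (N <= n)%N /\ P n) ->
  forall j, P (phi_rec P j) /\ (j <= phi_rec P j)%N /\ (phi_rec P j < phi_rec P j.+1)%N.
Proof.
move=> HP.
have step j : (phi_rec P j < phi_rec P j.+1)%N /\ P (phi_rec P j.+1).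
  have [n [Nn Pn]] := HP (phi_rec P j).+1.
  have : [set n | (phi_rec P j < n)%N /\ P n] (phi_rec P j.+1).
    by rewrite /=; apply: (@xgetPex _ 0%N [set n | (phi_rec P j < n)%N /\ P n]); exists n.
  by [].
have P0 : P (phi_rec P 0).
  have [n [_ Pn]] := HP 0%N.
  by rewrite /=; apply: (@xgetPex _ 0%N [set n | P n]); exists n.
elim=> [|j [Pj [jle jlt]]]; first by split => //; split => //; exact: (step 0%N).1.
split; first exact: (step j).2.
split; first exact: leq_ltn_trans jle jlt.
exact: (step j.+1).1.
Qed.

Lemma phi_inc (P : nat -> Prop) : (forall N, exists n, (N <= n)%N /\ P n) ->
  injective (phi_rec P).
Proof.
move=> HP.
have lt i k : (i < k)%N -> (phi_rec P i < phi_rec P k)%N.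
  elim: k => // k IH; rewrite ltnS leq_eqVlt => /orP[/eqP ->|ik].
    exact: (phi_recP HP k).2.2.
  exact: ltn_trans (IH ik) (phi_recP HP k).2.2.
move=> i k e; case: (ltngtP i k) => // ik.
  by have := lt _ _ ik; rewrite e ltnn.
by have := lt _ _ ik; rewrite e ltnn.
Qed.

Section P. Variable R : realType.
HB.instance Definition _ := isPointed.Build R 0%R.
Lemma getg (C : set R) : (C #= ~` C)%card -> exists g : R -> R, set_bij C (~` C) g.
Proof. by move/card_set_bijP. Qed.
End P.

Lemma main (R : realType) (C : set R) :
  (C #= [set: R])%card -> (~` C #= [set: R])%card -> ~ C 0 ->
  exists f : set R -> R, two_point_selection f /\
    caratheodory_measurable (sel_lambda f) C /\ ~ sel_borel f C.
Proof.
move=> hC hnC C0.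
have hCC : (C #= ~` C)%card by exact: card_eq_trans hC (card_esym hnC).
have [g gbij] := getg hCC.
have ncC : ~ countable C.
  move=> cC; have cT : countable [set: R] by rewrite -(eq_countable hC).
  have c01 : countable [set` `[(0:R), 1]] by apply: sub_countable cT; apply: subset_card_le.
  have := countable_lebesgue_measure0 c01.
  rewrite lebesgue_measure_itv /= lte_fin ltr01 oppr0 adde0 => /eqP.
  by rewrite eqe oner_eq0.
pose t (n : nat) : R := ((2 ^ n)%:R)^-1.
have t_inj : injective t.
  move=> a b /invr_inj /eqP; rewrite eqr_nat => /eqP; exact: expnI.
have t_pos n : 0 < t n by rewrite invr_gt0 ltr0n expn_gt0.
pose P0 n := C (t n) /\ t n <> p C g 0.
pose P1 n := ~ C (t n).
have dich : (forall N, exists n, (N <= n)%N /\ P0 n) \/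
            (forall N, exists n, (N <= n)%N /\ P1 n).
  have [[N0 HN0]|no] := pselect (exists N0, forall n, (N0 <= n)%N -> ~ P0 n).
    right => N.
    have [m1 m2] : (N0 <= maxn N N0)%N /\ (N0 <= (maxn N N0).+1)%N.
      by split; [rewrite leq_maxr|apply: leqW; rewrite leq_maxr].
    have [[c1|e1] [c2|e2]] : (P1 (maxn N N0) \/ t (maxn N N0) = p C g 0) /\
        (P1 (maxn N N0).+1 \/ t (maxn N N0).+1 = p C g 0).
      split.
        have := HN0 _ m1; rewrite /P0 /P1.
        by have [Cx|nCx] := pselect (C (t (maxn N N0))); [right; apply: contrapT => K; apply: (HN0 _ m1)|left].
      have := HN0 _ m2; rewrite /P0 /P1.
      by have [Cx|nCx] := pselect (C (t (maxn N N0).+1)); [right; apply: contrapT => K; apply: (HN0 _ m2)|left].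
    - by exists (maxn N N0); split => //; rewrite leq_maxl.
    - by exists (maxn N N0); split => //; rewrite leq_maxl.
    - by exists (maxn N N0).+1; split => //; apply: leqW; rewrite leq_maxl.
    - by have := t_inj _ _ (etrans e1 (esym e2)) => /eqP; rewrite -[X in X == _]addn0 -addn1 eqn_add2l.
  left => N; apply: contrapT => K; apply: no; exists N => n Nn P0n; apply: K.
  by exists n.
have key : forall Q : nat -> Prop, (forall N, exists n, (N <= n)%N /\ Q n) ->
    (forall n, Q n -> (C (t n) /\ t n <> p C g 0) \/ ~ C (t n)) ->
    ((forall n, Q n -> C (t n)) \/ (forall n, Q n -> ~ C (t n))) ->
  exists f : set R -> R, two_point_selection f /\
    caratheodory_measurable (sel_lambda f) C /\ ~ sel_borel f C.
  move=> Q HQ Qok Qside.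
  pose y j := t (phi_rec Q j).
  have yQ j : Q (phi_rec Q j) := (phi_recP HQ j).1.
  have y_inj : injective y by move=> a b /t_inj /(phi_inc HQ).
  have y_side : (forall j, C (y j)) \/ (forall j, ~ C (y j)).
    by case: Qside => H; [left|right] => j; apply: H.
  have y_p0 : forall j, p C g (y j) <> p C g 0.
    move=> j; case: (Qok _ (yQ j)) => [[Cy ne]|nCy].
      by rewrite (pCx gbij Cy).
    move=> e; have := p_inj gbij e; rewrite /y => H.
    have : t (phi_rec Q j) = 0 by apply: H; split => // K.
    by move=> e0; have := t_pos (phi_rec Q j); rewrite e0 ltxx.
  have y_bnd : forall j, `|y j| <= ((2 ^ j)%:R)^-1.
    move=> j; have yp : 0 <= y j by apply: ltW; apply: t_pos.
    rewrite (ger0_norm yp) /y /t; apply: inv2_le.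
    exact: (phi_recP HQ j).2.1.
  exists (@f R C g y); split; first by have := tps gbij y_inj y_side y_p0.
  split; first by have := carat gbij y_inj y_side y_p0 C0 y_bnd.
  by have := not_borel gbij y_inj y_side y_p0 ncC.
case: dich => HQ.
  apply: (key _ HQ); first by move=> n Hn; left.
  by left => n [].
apply: (key _ HQ); first by move=> n Hn; right.
by right.
Qed.

Theorem theorem3p21 (R : realType) (C : set R) :
  (C #= [set: R])%card -> (~` C #= [set: R])%card ->
  exists f : set R -> R, two_point_selection f /\
    caratheodory_measurable (sel_lambda f) C /\ ~ sel_borel f C.
Proof.
move=> hC hnC; have [C0|nC0] := pselect (C 0); last exact: main.
have [f [tf [cf bf]]] : exists f : set R -> R, two_point_selection f /\
    caratheodory_measurable (sel_lambda f) (~` C) /\ ~ sel_borel f (~` C).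
  by apply: main => //; rewrite setCK.
exists f; split => //; split.
  by move=> X; rewrite (cf X) setCK addeC.
move=> BC; apply: bf.
have [_ Hc _] := smallest_sigma_algebra setT (sel_open f).
by rewrite -setTD; apply: Hc.
Qed.
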